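(* Let $\mathcal G$ be a constructor GRS over a finite signature $\mathcal F$ that is precedence terminating with argument separation, and suppose there is $d\in\mathbb N$ with $d\ge\max\big(\{\mathrm{ar}(f):f\in\mathcal F\}\cup\{|K{\restriction}r|:(K,l,r)\in\mathcal G_{\mathrm{fin}}\}\big)$ such that every rule $(K,l,r)\in\mathcal G_{\mathrm{inf}}$ satisfies: (i) $(K{\restriction}l)\cap\mathrm{nrm}$ is maximally shared; (ii) $K{\restriction}v$ is closed for every labeled $v\in\mathrm{nrm}(l)$; (iii) $\big|\{v\in\mathrm{nrm}(l):v\text{ unlabeled}\}\cup\bigcup_{v\in\mathrm{safe}(l)}V_{K\restriction v}\big|\le d$; (iv) $|K{\restriction}r|\le|K{\restriction}l|+\big|\bigcup_{v\in\mathrm{nrm}(r)}V_{K\restriction v}\big|$. Then there is a polynomial $p:\mathbb N\to\mathbb N$ such that for every closed basic term graph $G_0\in\mathcal{TG}(\mathcal F)$ and every term graph $G$, if $G_0\to^m_{\mathcal G}G$ then, writing $N=\bigcup_{v\in\mathrm{nrm}(\rho_{G_0})}V_{G_0\restriction v}$: (1) $m\le p(|N|)$; and (2) $|G|\le p(|N|)+|V_{G_0}\setminus N|$.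
   Context: Term graphs. $\mathcal F=\mathcal C\cup\mathcal D$ is a finite signature (constructors and defined symbols, disjoint) with arity function $\mathrm{ar}$. A labeled graph consists of a finite acyclic directed graph $(V_G,E_G)$, a partial labeling $\mathrm{lab}_G:V_G\to\mathcal F$ and a successor function $\mathrm{att}_G:V_G\to V_G^*$ such that $\mathrm{att}_G(v)$ has length $\mathrm{ar}(\mathrm{lab}_G(v))$ if $v$ is labeled and is empty otherwise, and the set of entries of $\mathrm{att}_G(v)$ equals $\{u:(v,u)\in E_G\}$. Unlabeled nodes act as variables. A term graph additionally has a root $\rho_G$ from which every node is reachable; $\mathcal{TG}(\mathcal F)$ is the set of term graphs over $\mathcal F$, $\mathcal{TG}(\mathcal C)$ those whose labeled nodes carry constructors. $G{\restriction}v$ is the sub-term graph of nodes reachable from $v$, rooted at $v$; $H\subseteq G$ means $H=G{\restriction}v$ for some $v$. $|G|=|V_G|$. $G$ is closed if every node is labeled; basic if $\mathrm{lab}_G(\rho_G)\in\mathcal D$ and $G{\restriction}v\in\mathcal{TG}(\mathcal C)$ for every successor $v$ of $\rho_G$. Choosing an injective map from unlabeled nodes to variables, each $G{\restriction}v$ has a term representation $\mathrm{term}(G{\restriction}v)$; $G$ is maximally shared if $\mathrm{term}(G{\restriction}u)=\mathrm{term}(G{\restriction}v)$ implies $u=v$. Argument separation. The argument positions of each $f\in\mathcal F$ are split into normal and safe ones; constructors have only safe positions; nodes with the same label have the same separation. $\mathrm{nrm}(v)$ (resp. $\mathrm{safe}(v)$) is the set of successors of $v$ at normal (resp. safe) positions.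 $H\sqsubset_{\mathrm{nrm}}G$ means $H\subseteq G{\restriction}v$ for some $v\in\mathrm{nrm}(\rho_G)$. For $G$ with $\mathrm{att}_G(\rho_G)=v_1,\dots,v_k;v_{k+1},\dots,v_{k+l}$, $G\cap\mathrm{nrm}$ is the term graph with root $\rho_G$ whose nodes are $\rho_G$, the nodes of $G{\restriction}v$ for $v\in\mathrm{nrm}(\rho_G)$ (with labels and successors from $G$), and $l$ fresh unlabeled nodes $u_1,\dots,u_l$, with $\mathrm{att}(\rho_G)=v_1,\dots,v_k;u_1,\dots,u_l$ (if no safe successor of the root is labeled, $G\cap\mathrm{nrm}=G$). Rewriting. Homomorphisms of labeled graphs preserve labels, successor sequences at labeled nodes (nothing required at unlabeled nodes) and the normal/safe split. A graph rewrite rule $(K,l,r)$ is a labeled graph $K$ with distinct nodes $l,r$ such that every unlabeled node of $K{\restriction}r$ lies in $K{\restriction}l$; it is a constructor rule if $K{\restriction}l$ is basic. A GRS is a (possibly infinite) set of rules; a constructor GRS consists of constructor rules. For a rule $(K,l,r)$ and homomorphism $\varphi:K{\restriction}l\to G$, the step $G\to_{\mathcal G}H$ is the standard build/redirection/garbage-collection step replacing $G{\restriction}\varphi(l)$ by an instance of $K{\restriction}r$ (new labeled nodes fresh, unlabeled nodes mapped via $\varphi$, edges into $\varphi(l)$ redirected to the image of $r$, unreachable nodes removed). $\to^m_{\mathcal G}$ is the $m$-fold iteration. $\mathcal D_{\mathrm{inf}}$ is the set of defined symbols labeling the left root of infinitely many rules of $\mathcal G$, $\mathcal D_{\mathrm{fin}}=\mathcal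 D\setminus\mathcal D_{\mathrm{inf}}$; $\mathcal G_{\mathrm{inf}}=\{(K,l,r)\in\mathcal G:\mathrm{lab}_K(l)\in\mathcal D_{\mathrm{inf}}\}$, $\mathcal G_{\mathrm{fin}}=\mathcal G\setminus\mathcal G_{\mathrm{inf}}$. Precedence termination with argument separation. A precedence $\sqsubset$ is a well-founded strict partial order on $\mathcal F$ with all constructors minimal. $H\sqsubset_{\mathrm{pt}}G$ holds if $\mathrm{lab}_H(v)\sqsubset\mathrm{lab}_G(\rho_G)$ for every labeled node $v$ of $H$ and either (1) $H=G{\restriction}u$ or $H\sqsubset_{\mathrm{pt}}G{\restriction}u$ for some successor $u$ of $\rho_G$; or (2) $\rho_H$ is labeled, $H{\restriction}v\sqsubset_{\mathrm{nrm}}G$ for each $v\in\mathrm{nrm}(\rho_H)$, and $H{\restriction}v\sqsubset_{\mathrm{pt}}G$ for each $v\in\mathrm{safe}(\rho_H)$. $\mathcal G$ is precedence terminating with argument separation if for some separation and precedence, $K{\restriction}r\sqsubset_{\mathrm{pt}}K{\restriction}l$ for every rule. *)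

(* Defs.v *)
From mathcomp Require Import all_boot all_order ssralg poly.
From Stdlib Require List.
Set Implicit Arguments. Unset Strict Implicit. Unset Printing Implicit Defensive.

Section TermGraphs.
Variable F : finType.

Record lgraph := LGraph { nodes : seq nat; lab : nat -> option F; att : nat -> seq nat }.

Definition succs (G : lgraph) (v : nat) : seq nat :=
  if v \in nodes G then att G v else [::].

Fixpoint reachn (G : lgraph) (n : nat) (v u : nat) : bool :=
  (v == u) || (if n is n'.+1 then has (fun w => reachn G n' w u) (succs G v) else false).

(* u is reachable from v (paths of length <= |V_G| suffice) *)
Definition reachb (G : lgraph) (v u : nat) : bool := reachn G (size (nodes G)) v u.

Definition acyclic (G : lgraph) : Prop :=
  forall v u, v \in nodes G -> u \in att G v -> ~~ reachb G u v.

Definition wf_lgraph (ar : F -> nat) (G : lgraph) : Prop :=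
  [/\ uniq (nodes G),
      (forall v, v \in nodes G ->
         (match lab G v with Some f => size (att G v) = ar f | None => att G v = [::] end)
         /\ all (fun u => u \in nodes G) (att G v))
    & acyclic G].

Record tgraph := TGraph { tg : lgraph; troot : nat }.

Definition wf_tgraph (ar : F -> nat) (G : tgraph) : Prop :=
  [/\ wf_lgraph ar (tg G), troot G \in nodes (tg G)
    & forall v, v \in nodes (tg G) -> reachb (tg G) (troot G) v].

Definition sub (G : lgraph) (v : nat) : tgraph :=
  TGraph (LGraph [seq u <- nodes G | reachb G v u] (lab G) (att G)) v.

Definition gsize (G : tgraph) : nat := size (nodes (tg G)).

Definition gclosed (G : tgraph) : Prop :=
  forall v, v \in nodes (tg G) -> lab (tg G) v <> None.

Definition constr_graph (isC : pred F) (G : tgraph) : Prop :=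
  forall v f, v \in nodes (tg G) -> lab (tg G) v = Some f -> isC f.

Definition basic (isC : pred F) (G : tgraph) : Prop :=
  (exists2 f, lab (tg G) (troot G) = Some f & ~~ isC f) /\
  (forall v, v \in att (tg G) (troot G) -> constr_graph isC (sub (tg G) v)).

Inductive term := Var of nat | Fun of F & seq term.

Fixpoint tm (G : lgraph) (n : nat) (v : nat) : term :=
  match n with
  | 0 => Var v
  | n'.+1 => match lab G v with
             | Some f => Fun f (map (tm G n') (att G v))
             | None => Var v
             end
  end.

Definition termof (G : tgraph) (v : nat) : term := tm (tg G) (size (nodes (tg G))).+1 v.

Definition max_shared (G : tgraph) : Prop :=
  forall u v, u \in nodes (tg G) -> v \in nodes (tg G) -> termof G u = termof G v -> u = v.

(* argument separation: sep f i = true iff position i of f is normal *)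
Variable sep : F -> nat -> bool.

Definition nrm (G : lgraph) (v : nat) : seq nat :=
  match lab G v with
  | Some f => mask [seq sep f i | i <- iota 0 (size (att G v))] (att G v)
  | None => [::]
  end.

Definition safe (G : lgraph) (v : nat) : seq nat :=
  match lab G v with
  | Some f => mask [seq ~~ sep f i | i <- iota 0 (size (att G v))] (att G v)
  | None => [::]
  end.

Definition nodes_below (G : lgraph) (s : seq nat) : seq nat :=
  undup (flatten [seq nodes (tg (sub G v)) | v <- s]).

(* G ∩ nrm : safe successors of the troot replaced by fresh unlabeled nodes
   (fresh names M + i, M larger than every node of G) *)
Definition cap_nrm (G : tgraph) : tgraph :=
  let K := tg G in
  let rho := troot G in
  match lab K rho with
  | None => G
  | Some f =>
    if all (fun v => lab K v == None) (safe K rho) then G else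
    let a := att K rho in
    let M := (foldr maxn rho (nodes K)).+1 in
    let posS := [seq i <- iota 0 (size a) | ~~ sep f i] in
    let newatt := [seq (if sep f i then nth 0 a i else M + i) | i <- iota 0 (size a)] in
    TGraph (LGraph (rho :: nodes_below K (nrm K rho) ++ [seq M + i | i <- posS])
                   (fun x => if M <= x then None else lab K x)
                   (fun x => if x == rho then newatt else if M <= x then [::] else att K x))
           rho
  end.

(* precedence termination with argument separation, for sub-term graphs
   H = K|h and G = K|g of a common labeled graph K *)
Section PT.
Variable prec : rel F.
Variable K : lgraph.

Definition lab_below (h g : nat) : Prop :=
  forall w f, w \in nodes (tg (sub K h)) -> lab K w = Some f ->
    exists2 f', lab K g = Some f' & prec f f'.

Inductive pt : nat -> nat -> Prop :=
| PT1 h g u : lab_below h g -> u \in att K g -> (h = u \/ pt h u) -> pt h g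
| PT2 h g : lab_below h g -> lab K h <> None ->
    (forall v, v \in nrm K h -> exists2 u, u \in nrm K g & reachb K u v) ->
    (forall v, v \in safe K h -> pt v g) -> pt h g.
End PT.

Record rule := Rule { rK : lgraph; rl : nat; rr : nat }.

Definition wf_rule (ar : F -> nat) (ru : rule) : Prop :=
  [/\ wf_lgraph ar (rK ru), rl ru \in nodes (rK ru), rr ru \in nodes (rK ru),
      rl ru <> rr ru
    & forall v, v \in nodes (tg (sub (rK ru) (rr ru))) -> lab (rK ru) v = None ->
        v \in nodes (tg (sub (rK ru) (rl ru)))].

Definition constructor_rule (isC : pred F) (ru : rule) : Prop :=
  basic isC (sub (rK ru) (rl ru)).

Definition rule_eq (r1 r2 : rule) : Prop :=
  [/\ rl r1 = rl r2, rr r1 = rr r2, nodes (rK r1) =i nodes (rK r2)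
    & forall v, v \in nodes (rK r1) ->
        lab (rK r1) v = lab (rK r2) v /\ att (rK r1) v = att (rK r2) v].

Variable GRS : rule -> Prop.

Definition left_label (ru : rule) : option F := lab (rK ru) (rl ru).

(* f labels the left troot of infinitely many rules *)
Definition D_inf (f : F) : Prop :=
  ~ exists s : seq rule, forall ru, GRS ru -> left_label ru = Some f ->
      exists2 ru', List.In ru' s & rule_eq ru ru'.

Definition in_G_inf (ru : rule) : Prop :=
  exists2 f, left_label ru = Some f & D_inf f.

Definition hom (K : lgraph) (l : nat) (G : lgraph) (phi : nat -> nat) : Prop :=
  forall v, v \in nodes (tg (sub K l)) ->
    phi v \in nodes G /\
    (forall f, lab K v = Some f -> lab G (phi v) = Some f /\ att G (phi v) = map phi (att K v)).

(* the result of applying rule ru at the match phi in G, new labeled nodes of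
   K|r being named by iota: build, redirect, garbage collect *)
Definition rewrite_result (G : tgraph) (ru : rule) (phi iota : nat -> nat) : tgraph :=
  let K := rK ru in
  let Lr := [seq v <- nodes (tg (sub K (rr ru))) | lab K v != None] in
  let img v := if lab K v is Some _ then iota v else phi v in
  let newn := map iota Lr in
  let pre x := nth 0 Lr (index x newn) in
  let labB x := if x \in newn then lab K (pre x) else lab (tg G) x in
  let attB x := if x \in newn then map img (att K (pre x)) else att (tg G) x in
  let a := phi (rl ru) in
  let b := img (rr ru) in
  let red y := if y == a then b else y in
  sub (LGraph (nodes (tg G) ++ newn) labB (fun x => map red (attB x))) (red (troot G)).

Definition tg_eq (H H' : tgraph) : Prop :=
  [/\ troot H = troot H', perm_eq (nodes (tg H)) (nodes (tg H'))
    & forall v, v \in nodes (tg H) ->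
        lab (tg H) v = lab (tg H') v /\ att (tg H) v = att (tg H') v].

Definition step (G H : tgraph) : Prop :=
  exists ru phi iota,
    [/\ GRS ru, hom (rK ru) (rl ru) (tg G) phi,
        (forall v w, v \in nodes (tg (sub (rK ru) (rr ru))) ->
                     w \in nodes (tg (sub (rK ru) (rr ru))) ->
                     lab (rK ru) v <> None -> lab (rK ru) w <> None ->
                     iota v = iota w -> v = w),
        (forall v, v \in nodes (tg (sub (rK ru) (rr ru))) -> lab (rK ru) v <> None ->
                   iota v \notin nodes (tg G))
      & tg_eq H (rewrite_result G ru phi iota)].

Inductive nsteps : nat -> tgraph -> tgraph -> Prop :=
| nsteps0 G : nsteps 0 G G
| nstepsS n G G' H : step G G' -> nsteps n G' H -> nsteps n.+1 G H.

End TermGraphs.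

Definition precedence (F : finType) (isC : pred F) (prec : rel F) : Prop :=
  [/\ irreflexive prec, transitive prec, well_founded (fun x y => prec x y)
    & forall c f, isC c -> ~~ prec f c].

Definition separation (F : finType) (isC : pred F) (sep : F -> nat -> bool) : Prop :=
  forall c i, isC c -> sep c i = false.

(* Main.v *)
Require Import Defs.
From mathcomp Require Import all_boot all_order ssralg poly zify.
From Stdlib Require Import Classical.
Set Implicit Arguments. Unset Strict Implicit. Unset Printing Implicit Defensive.

Section Reach.
Variable F : finType.
Implicit Types G : lgraph F.

Definition edge G : rel nat := fun x y => y \in succs G x.
Definition rch G v u := exists2 p, path (edge G) v p & last v p = u.

Lemma reachn_rch G n v u : reachn G n v u -> rch G v u.
Proof.
elim: n v => [|n IH] v /=.
  by rewrite orbF => /eqP->; exists [::].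
case/orP => [/eqP-> | /hasP [w wS /IH [p pp pl]]]; first by exists [::].
by exists (w :: p) => //=; rewrite /edge wS.
Qed.

Lemma path_reachn G v p : path (edge G) v p -> reachn G (size p) v (last v p).
Proof.
elim: p v => [|w p IH] v /=; first by rewrite eqxx.
case/andP => e pp; apply/orP; right; apply/hasP; exists w => //; exact: IH.
Qed.

Lemma reachn_mono G m n v u : m <= n -> reachn G m v u -> reachn G n v u.
Proof.
elim: m n v => [|m IH] [|n] v //=.
- by rewrite orbF => _ ->.
- by move=> mn /orP [-> // | /hasP [w wS h]]; apply/orP; right; apply/hasP; exists w => //; exact: IH.
Qed.

Lemma edge_src G x y : edge G x y -> x \in nodes G.
Proof. by rewrite /edge /succs; case: ifP. Qed.

Lemma belast_nodes G v p : path (edge G) v p -> {subset belast v p <= nodes G}.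
Proof.
elim: p v => [|w p IH] v //= /andP [e pp] x; rewrite inE => /orP [/eqP-> | xi].
  exact: edge_src e.
exact: IH pp x xi.
Qed.

Lemma reachbP G v u : reflect (rch G v u) (reachb G v u).
Proof.
apply: (iffP idP); first exact: reachn_rch.
case=> p pp <-; case: (shortenP pp) => p' pp' up' _.
apply: (reachn_mono _ (path_reachn pp')).
rewrite -(size_belast v p'); apply: uniq_leq_size; last exact: belast_nodes pp'.
by move: up'; rewrite lastI rcons_uniq => /andP [].
Qed.

Lemma rch_refl G v : rch G v v. Proof. by exists [::]. Qed.
Lemma rch_trans G v w u : rch G v w -> rch G w u -> rch G v u.
Proof.
case=> p pp <- [q qq <-]; exists (p ++ q); first by rewrite cat_path pp.
by rewrite last_cat.
Qed.
Lemma rch_step G v w u : w \in succs G v -> rch G w u -> rch G v u.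
Proof. by move=> e; apply: rch_trans; exists [:: w] => //=; rewrite /edge e. Qed.

Lemma rch_inv G v u : rch G v u -> u = v \/ exists2 w, w \in succs G v & rch G w u.
Proof.
case=> [[|w p]] /=; first by left.
by case/andP => e pp <-; right; exists w => //; exists p.
Qed.

Lemma rch_inv_last G v u : rch G v u -> u = v \/ exists2 w, rch G v w & u \in succs G w.
Proof.
case=> p; elim/last_ind: p => [|p x _] /=; first by left.
rewrite rcons_path last_rcons => /andP [pp e] <-; right; exists (last v p) => //.
by exists p.
Qed.

End Reach.

Section Basic.
Variable F : finType.
Implicit Types G K : lgraph F.

Lemma mem_subn G v x : (x \in nodes (tg (sub G v))) = (x \in nodes G) && reachb G v x.
Proof. by rewrite /= mem_filter andbC. Qed.

Lemma mem_subP G v x : reflect (x \in nodes G /\ rch G v x) (x \in nodes (tg (sub G v))).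
Proof. by rewrite mem_subn; apply: (iffP andP) => -[a /reachbP b]. Qed.

Lemma succsE G x : x \in nodes G -> succs G x = att G x.
Proof. by rewrite /succs => ->. Qed.

Definition I2 G := forall x, x \in nodes G -> {subset att G x <= nodes G}.

Lemma rch_nodes G v w : I2 G -> v \in nodes G -> rch G v w -> w \in nodes G.
Proof.
move=> i2 vn [p]; elim: p v vn => [|y p IH] v vn /=; first by move=> _ <-.
case/andP => e pp; apply: IH pp; move: e; rewrite /edge succsE //; exact: i2.
Qed.

Lemma rch_noatt G v w : att G v = [::] -> rch G v w -> w = v.
Proof.
move=> hatt [[|y p]] //= /andP [e _] _; move: e.
by rewrite /edge /succs hatt; case: ifP.
Qed.

Lemma reachb_refl G v : reachb G v v.
Proof. by apply/reachbP; exact: rch_refl. Qed.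

Lemma gsize_lt G x y : uniq (nodes G) -> acyclic G -> x \in nodes G -> y \in att G x ->
  gsize (sub G y) < gsize (sub G x).
Proof.
move=> un ac xn yx; rewrite /gsize.
have: uniq (x :: nodes (tg (sub G y))).
  rewrite /= filter_uniq // andbT mem_subn negb_and (ac x y xn yx) orbT //.
move/uniq_leq_size => h; apply: h => w; rewrite inE => /orP [/eqP-> | ].
  by rewrite mem_subn xn reachb_refl.
move/mem_subP => [wn yw]; apply/mem_subP; split => //.
by apply: rch_step yw; rewrite succsE.
Qed.

Lemma gsize_ge1 G x : x \in nodes G -> 0 < gsize (sub G x).
Proof. by move=> xn; rewrite /gsize lt0n size_eq0 -has_filter; apply/hasP; exists x => //; rewrite reachb_refl. Qed.

Lemma gsize_mono G x y : uniq (nodes G) -> rch G x y -> gsize (sub G y) <= gsize (sub G x).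
Proof.
move=> un xy; apply: uniq_leq_size; first by rewrite filter_uniq.
by move=> w /mem_subP [wn yw]; apply/mem_subP; split => //; apply: rch_trans yw.
Qed.

Lemma mask_split (m : seq bool) (s : seq nat) x : size m = size s -> x \in s ->
  x \in mask m s \/ x \in mask (map negb m) s.
Proof.
elim: s m => [|y s IH] [|b m] //= [sz]; rewrite inE => /orP [/eqP-> | xs].
  by case: b; [left; rewrite inE eqxx | right; rewrite inE eqxx].
by case: (IH m sz xs) => h; case: b => /=; rewrite ?inE h ?orbT; auto.
Qed.

Lemma mask_allF (m : seq bool) (s : seq nat) : all negb m -> mask m s = [::].
Proof. by elim: m s => [|b m IH] [|y s] //= /andP [/negPf -> h]; apply: IH. Qed.

Variable sep : F -> nat -> bool.

Lemma mem_nrm G x v : v \in nrm sep G x -> v \in att G x.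
Proof. by rewrite /nrm; case: (lab G x) => // f; apply: mem_mask. Qed.
Lemma mem_safe G x v : v \in safe sep G x -> v \in att G x.
Proof. by rewrite /safe; case: (lab G x) => // f; apply: mem_mask. Qed.

Lemma att_split G x v f : lab G x = Some f -> v \in att G x ->
  v \in nrm sep G x \/ v \in safe sep G x.
Proof.
rewrite /nrm /safe => -> vx.
have := @mask_split [seq sep f i | i <- iota 0 (size (att G x))] (att G x) v.
by rewrite size_map size_iota -map_comp => /(_ erefl vx).
Qed.

Lemma nrm_constr (isC : pred F) G x c : (forall c i, isC c -> sep c i = false) ->
  lab G x = Some c -> isC c -> nrm sep G x = [::].
Proof.
move=> hs; rewrite /nrm => -> cC; apply: mask_allF; apply/allP => b /mapP [i _ ->].
by rewrite hs.
Qed.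

Lemma nrm_map G G' x x' (h : nat -> nat) : lab G' x' = lab G x -> att G' x' = map h (att G x) ->
  nrm sep G' x' = map h (nrm sep G x).
Proof. by rewrite /nrm => -> ->; case: (lab G x) => // f; rewrite map_mask size_map. Qed.

Lemma mem_nodes_below G s w :
  reflect (exists2 v, v \in s & w \in nodes (tg (sub G v))) (w \in nodes_below G s).
Proof. by rewrite /nodes_below mem_undup; apply: flatten_mapP. Qed.

Lemma nodes_below_uniq G s : uniq (nodes_below G s).
Proof. exact: undup_uniq. Qed.

Lemma foldr_maxn_ge (s : seq nat) a x : x \in s -> x <= foldr maxn a s.
Proof.
elim: s => [|y s IH] //=; rewrite inE => /orP [/eqP-> | /IH h]; first by rewrite leq_maxl.
by rewrite (leq_trans h) // leq_maxr.
Qed.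

Lemma sumn_bound (s : seq nat) c : (forall x, x \in s -> x <= c) -> sumn s <= size s * c.
Proof.
elim: s => [|y s IH] //= h; rewrite mulSn leq_add ?h ?inE ?eqxx //.
by apply: IH => x xs; apply: h; rewrite inE xs orbT.
Qed.

End Basic.

Lemma rch_subsub (F : finType) (G : lgraph F) s v w :
  rch G s v -> rch G v w -> rch (tg (sub G s)) v w.
Proof.
move=> sv [p]; elim: p v sv => [|y p IH] v sv /=; first by move=> _ <-; exact: rch_refl.
case/andP => e pp pl; have vn := edge_src e.
have sy : rch G s y by apply: rch_trans sv _; exists [:: y] => //=; rewrite e.
apply: rch_step (IH y sy pp pl).
rewrite succsE; last by rewrite mem_subn vn; apply/reachbP.
by move: e; rewrite /edge succsE.
Qed.

Section Rules.
Variables (F : finType) (ar : F -> nat) (isC : pred F) (sep : F -> nat -> bool) (prec : rel F).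
Hypothesis hsep : separation isC sep.
Hypothesis hprec : precedence isC prec.
Variable ru : rule F.
Hypothesis wfr : wf_rule ar ru.
Hypothesis cr : constructor_rule isC ru.

Local Notation K := (rK ru).
Local Notation l := (rl ru).
Local Notation r := (rr ru).

Lemma wfK : wf_lgraph ar K. Proof. by case: wfr. Qed.
Lemma uniqK : uniq (nodes K). Proof. by case: wfK. Qed.
Lemma I2K : I2 K. Proof. by case: wfK => _ h _ x /h [_ /allP]. Qed.
Lemma I2K' x y : x \in nodes K -> y \in att K x -> y \in nodes K.
Proof. move=> xn yx; exact: (I2K xn yx). Qed.
Lemma acK : acyclic K. Proof. by case: wfK. Qed.
Lemma unlK x : x \in nodes K -> lab K x = None -> att K x = [::].
Proof. by case: wfK => _ h _ /h [+ _] => + e; rewrite e. Qed.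
Lemma arK x f : x \in nodes K -> lab K x = Some f -> size (att K x) = ar f.
Proof. by case: wfK => _ h _ /h [+ _] => + e; rewrite e. Qed.
Lemma lnK : l \in nodes K. Proof. by case: wfr. Qed.
Lemma rnK : r \in nodes K. Proof. by case: wfr. Qed.
Lemma lr_neq : l <> r. Proof. by case: wfr. Qed.
Lemma unl_r_in_l v : v \in nodes (tg (sub K r)) -> lab K v = None -> v \in nodes (tg (sub K l)).
Proof. by move=> h1 h2; case: wfr => _ _ _ _; apply. Qed.

Lemma lroot : exists2 f, lab K l = Some f & ~~ isC f.
Proof. by case: cr => -[f e1 e2] _; exists f. Qed.

Lemma creg_constr c w g : c \in att K l -> w \in nodes K -> rch K c w -> lab K w = Some g -> isC g.
Proof.
move=> cl wn cw lw; case: cr => _ /(_ c cl) h; apply: (h w) => //.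
rewrite mem_subn mem_subn wn /=; apply/andP; split; apply/reachbP.
  by apply: rch_step cw; rewrite succsE // lnK.
by apply: rch_subsub cw; apply: rch_step (rch_refl _ _); rewrite succsE // lnK.
Qed.

Lemma pt_lab_below h g : pt sep prec K h g -> lab_below prec K h g.
Proof. by case. Qed.

Lemma pt_noLab h u : pt sep prec K h u -> u \in att K l ->
  forall w, w \in nodes (tg (sub K h)) -> lab K w = None.
Proof.
move=> /pt_lab_below lb ul w wh; case e: (lab K w) => [f|] //.
case: (lb w f wh e) => f' e' pf.
have un : u \in nodes K by apply: I2K ul; exact: lnK.
have := creg_constr ul un (rch_refl _ _) e'.
by case: hprec => _ _ _ /(_ f' f) hh /hh; rewrite pf.
Qed.

Lemma pt_nrm_gen h g : pt sep prec K h g -> g = l -> forall x, x \in nodes K -> rch K h x -> forall gx, lab K x = Some gx ->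
  forall y, y \in nrm sep K x -> exists2 u, u \in nrm sep K l & rch K u y.
Proof.
move=> H; elim: H => {h g}.
- move=> h g u lb ug hu gl x xn hx gx lx; subst g.
  case: hu => [eh | ptu]; last first.
    have : x \in nodes (tg (sub K h)) by rewrite mem_subn xn; apply/reachbP.
    by move/(pt_noLab ptu ug); rewrite lx.
  subst h; have gC := creg_constr ug xn hx lx.
  by rewrite (nrm_constr hsep lx gC).
- move=> h g lb lh hn hs IH gl x xn hx gx lx y yx; subst g.
  case: (rch_inv hx) => [exh | [c ch cx]].
    by subst x; case: (hn y yx) => u ul /reachbP; exists u.
  have hnK : h \in nodes K by move: ch; rewrite /succs; case: ifP.
  rewrite succsE // in ch.
  case e: (lab K h) => [fh|]; last by [].
  case: (att_split sep e ch) => [cn | cs]; last exact: IH cs erefl x xn cx gx lx y yx.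
  case: (hn c cn) => u ul /reachbP uc.
  have uc' := rch_trans uc cx.
  have gC := creg_constr (mem_nrm ul) xn uc' lx.
  by rewrite (nrm_constr hsep lx gC) in yx.
Qed.

Lemma pt_nrm : pt sep prec K r l -> forall x, x \in nodes K -> rch K r x -> forall gx, lab K x = Some gx ->
  forall y, y \in nrm sep K x -> exists2 u, u \in nrm sep K l & rch K u y.
Proof. by move=> H; apply: pt_nrm_gen H erefl. Qed.

End Rules.

Lemma map_eq2 (f : nat -> nat) (T : Type) (g : nat -> T) (s1 s2 : seq nat) :
  map f s1 = map f s2 -> (forall a b, a \in s1 -> b \in s2 -> f a = f b -> g a = g b) ->
  map g s1 = map g s2.
Proof.
elim: s1 s2 => [|a s1 IH] [|b s2] //= [e1 e2] h.
rewrite (h a b) ?inE ?eqxx // (IH s2 e2) // => x y xs ys; apply: h; by rewrite inE ?xs ?ys orbT.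
Qed.

Section Hom.
Variables (F : finType) (ar : F -> nat) (isC : pred F) (sep : F -> nat -> bool) (prec : rel F).
Hypothesis hsep : separation isC sep.
Hypothesis hprec : precedence isC prec.
Variable ru : rule F.
Hypothesis wfr : wf_rule ar ru.
Hypothesis cr : constructor_rule isC ru.
Local Notation K := (rK ru).
Local Notation l := (rl ru).
Local Notation r := (rr ru).
Variable G : lgraph F.
Variable phi : nat -> nat.
Hypothesis hh : hom K l G phi.

Lemma hom_reach x y : x \in nodes (tg (sub K l)) -> rch K x y ->
  rch G (phi x) (phi y) /\ y \in nodes (tg (sub K l)).
Proof.
move=> xl [p]; elim: p x xl => [|z p IH] x xl /=; first by move=> _ <-; split => //; exact: rch_refl.
case/andP => e pp pl; have xn := edge_src e; move: e; rewrite /edge succsE // => zx.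
case ex: (lab K x) => [f|]; last by rewrite (unlK wfr xn ex) in zx.
have [pxn /(_ f ex) [_ attx]] := hh xl.
have zl : z \in nodes (tg (sub K l)).
  move/mem_subP: xl => [_ lx]; apply/mem_subP; split; first exact (I2K' wfr xn zx).
  by apply: rch_trans lx _; apply: rch_step (rch_refl _ _); rewrite succsE.
case: (IH z zl pp pl) => h1 h2; split => //; apply: rch_step h1.
by rewrite succsE // attx map_f.
Qed.

Lemma sub_l_of x w : x \in nodes (tg (sub K l)) -> w \in nodes (tg (sub K x)) -> w \in nodes (tg (sub K l)).
Proof. by move=> /mem_subP [_ lx] /mem_subP [wn xw]; apply/mem_subP; split => //; apply: rch_trans xw. Qed.

Lemma att_l_in_sub u : u \in att K l -> u \in nodes (tg (sub K l)).
Proof.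
move=> ul; apply/mem_subP; split; first exact (I2K' wfr (lnK wfr) ul).
by apply: rch_step (rch_refl _ _); rewrite succsE // (lnK wfr).
Qed.

Variable u : nat.
Hypothesis ul : u \in nrm sep K l.
Hypothesis ulab : lab K u <> None.
Hypothesis ucl : gclosed (sub K u).
Hypothesis ms : max_shared (cap_nrm sep (sub K l)).

Local Notation S := (nodes (tg (sub K u))).

Lemma S_in_l z : z \in S -> z \in nodes (tg (sub K l)).
Proof. by apply: sub_l_of; apply: att_l_in_sub; exact: mem_nrm ul. Qed.

Lemma cap_props z : z \in S ->
  [/\ z \in nodes (tg (cap_nrm sep (sub K l))),
      lab (tg (cap_nrm sep (sub K l))) z = lab K z
    & att (tg (cap_nrm sep (sub K l))) z = att K z].
Proof.
move=> zS; have zl := S_in_l zS.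
have uatt : u \in att K l := mem_nrm ul.
have zneq : z != l.
  apply/eqP => ezl; move/mem_subP: zS => [_ uz]; subst z.
  by have := acK wfr (lnK wfr) uatt; rewrite (introT (reachbP _ _ _) uz).
rewrite /cap_nrm /=; case: (lroot cr) => f -> _.
case: ifP => _ //=; split.
- rewrite inE mem_cat; apply/orP; right; apply/orP; left.
  apply/mem_nodes_below; exists u => //.
  move/mem_subP: zS => [zn uz]; apply/mem_subP; split => //.
  by apply: rch_subsub uz; move/mem_subP: (att_l_in_sub uatt) => [].
- by rewrite leqNgt ltnS foldr_maxn_ge.
- by rewrite (negPf zneq) leqNgt ltnS foldr_maxn_ge.
Qed.

Lemma tm_eq (Gc : lgraph F) :
  (forall z, z \in S -> lab Gc z = lab K z /\ att Gc z = att K z) ->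
  forall n x y, x \in S -> y \in S -> gsize (sub K x) <= n -> gsize (sub K y) <= n ->
    phi x = phi y -> tm Gc n x = tm Gc n y.
Proof.
move=> hGc; elim=> [|n IH] x y xS yS hx hy pxy.
  by move: hx; rewrite leqNgt gsize_ge1 //; case/mem_subP: xS.
have [xn _] := mem_subP _ _ _ xS; have [yn _] := mem_subP _ _ _ yS.
case ex: (lab K x) => [gx|]; last by case: (ucl xS).
case ey: (lab K y) => [gy|]; last by case: (ucl yS).
have [_ /(_ gx ex) [lx ax]] := hh (S_in_l xS).
have [_ /(_ gy ey) [ly ay]] := hh (S_in_l yS).
have [lcx acx] := hGc x xS; have [lcy acy] := hGc y yS.
rewrite /= lcx lcy ex ey acx acy.
move: lx ly; rewrite pxy => -> [<-]; congr Fun.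
apply: (map_eq2 (f := phi)); first by rewrite -ax -ay pxy.
move=> a b ax' by' pab.
have aS : a \in S.
  move/mem_subP: xS => [_ ux]; apply/mem_subP; split; first exact (I2K' wfr xn ax').
  by apply: rch_trans ux _; apply: rch_step (rch_refl _ _); rewrite succsE.
have bS : b \in S.
  move/mem_subP: yS => [_ uy]; apply/mem_subP; split; first exact (I2K' wfr yn by').
  by apply: rch_trans uy _; apply: rch_step (rch_refl _ _); rewrite succsE.
apply: IH => //.
  by rewrite -ltnS (leq_trans _ hx) // (gsize_lt (uniqK wfr) (acK wfr)).
by rewrite -ltnS (leq_trans _ hy) // (gsize_lt (uniqK wfr) (acK wfr)).
Qed.

Lemma phi_inj : {in S &, injective phi}.
Proof.
move=> x y xS yS pxy.
set Kc := cap_nrm sep (sub K l).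
have hb : forall z, z \in S -> gsize (sub K z) <= (size (nodes (tg Kc))).+1.
  move=> z zS; apply: leqW; apply: uniq_leq_size; first by rewrite filter_uniq // (uniqK wfr).
  move=> w /mem_subP [wn zw].
  have wS : w \in S by move/mem_subP: zS => [_ uz]; apply/mem_subP; split => //; apply: rch_trans zw.
  by case: (cap_props wS).
apply: ms; first by case: (cap_props xS).
  by case: (cap_props yS).
apply: (tm_eq (Gc := tg Kc)) => //; last exact: hb.
  by move=> z zS; case: (cap_props zS).
exact: hb.
Qed.

Lemma size_Ku : gsize (sub K u) <= gsize (sub G (phi u)).
Proof.
rewrite /gsize -(size_map phi); apply: uniq_leq_size.
  by rewrite (map_inj_in_uniq phi_inj) filter_uniq // (uniqK wfr).
move=> y /mapP [w wS ->]; have wl := S_in_l wS.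
have [pn _] := hh wl; rewrite mem_subn pn /=; apply/reachbP.
move/mem_subP: wS => [_ uw].
by case: (hom_reach (att_l_in_sub (mem_nrm ul)) uw).
Qed.

End Hom.

Section RuleSize.
Variables (F : finType) (ar : F -> nat) (isC : pred F) (sep : F -> nat -> bool) (prec : rel F).
Hypothesis hsep : separation isC sep.
Hypothesis hprec : precedence isC prec.
Variable ru : rule F.
Hypothesis wfr : wf_rule ar ru.
Hypothesis cr : constructor_rule isC ru.
Hypothesis ptr : pt sep prec (rK ru) (rr ru) (rl ru).
Local Notation K := (rK ru).
Local Notation l := (rl ru).
Local Notation r := (rr ru).
Variable G : lgraph F.
Variable phi : nat -> nat.
Hypothesis hh : hom K l G phi.
Variables (d Bn : nat).
Hypothesis hard : forall f, ar f <= d.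
Hypothesis hbn : forall u, u \in nrm sep K l -> lab K u <> None -> gsize (sub G (phi u)) <= Bn.
Hypothesis h1 : max_shared (cap_nrm sep (sub K l)).
Hypothesis h2 : forall v, v \in nrm sep K l -> lab K v <> None -> gclosed (sub K v).
Hypothesis h3 : size (undup ([seq v <- nrm sep K l | lab K v == None]
                      ++ nodes_below K (safe sep K l))) <= d.
Hypothesis h4 : gsize (sub K r) <= gsize (sub K l) + size (nodes_below K (nrm sep K r)).

Let Unl := [seq v <- nrm sep K l | lab K v == None].
Let Sb := nodes_below K (safe sep K l).
Let Lab := flatten [seq nodes (tg (sub K v)) | v <- [seq v <- nrm sep K l | lab K v != None]].

Lemma nb_nrm_l : {subset nodes_below K (nrm sep K l) <= undup (Unl ++ Sb) ++ Lab}.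
Proof.
move=> w /mem_nodes_below [v vn wv]; rewrite /Unl /Sb /Lab mem_cat.
have vK : v \in nodes K by exact (I2K' wfr (lnK wfr) (mem_nrm vn)).
case e: (lab K v) => [g|].
  apply/orP; right; apply/flatten_mapP; exists v => //; by rewrite mem_filter vn e.
apply/orP; left; rewrite mem_undup mem_cat mem_filter.
move/mem_subP: wv => [_ /(rch_noatt (unlK wfr vK e)) ->]; by rewrite vn e.
Qed.

Lemma sub_l_cover : {subset nodes (tg (sub K l)) <= l :: (undup (Unl ++ Sb) ++ Lab)}.
Proof.
move=> w /mem_subP [wn lw]; rewrite /Unl /Sb /Lab inE; case: (rch_inv lw) => [-> | [c cs cw]]; first by rewrite eqxx.
rewrite succsE ?(lnK wfr) // in cs; apply/orP; right.
case: (lroot cr) => f lf _.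
have cK : c \in nodes K by exact (I2K' wfr (lnK wfr) cs).
case: (att_split sep lf cs) => [cn | cS].
  apply: nb_nrm_l; apply/mem_nodes_below; exists c => //; by apply/mem_subP.
rewrite mem_cat mem_undup mem_cat; apply/orP; left; apply/orP; right.
by apply/mem_nodes_below; exists c => //; apply/mem_subP.
Qed.

Lemma size_Lab : size Lab <= d * Bn.
Proof.
rewrite /Lab size_flatten /shape -map_comp.
apply: (leq_trans (sumn_bound (c := Bn) _)).
  move=> x /mapP [v]; rewrite mem_filter => /andP [/eqP lv vn] ->.
  apply: leq_trans (hbn vn lv).
  exact (size_Ku wfr cr hh vn (h2 vn lv) h1).
rewrite size_map leq_mul2r; apply/orP; right.
rewrite size_filter; apply: leq_trans (count_size _ _) _.
case: (lroot cr) => f lf _; rewrite /nrm lf.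
apply: leq_trans (size_subseq (mask_subseq _ _)) _.
by rewrite (arK wfr (lnK wfr) lf) hard.
Qed.

Lemma size_sub_l : gsize (sub K l) <= 1 + d + d * Bn.
Proof.
rewrite /gsize; apply: leq_trans (uniq_leq_size (filter_uniq _ (uniqK wfr)) sub_l_cover) _.
rewrite /= size_cat; have := size_Lab; have := h3; rewrite /Unl /Sb /Lab => H1 H2.
apply: leq_ltn_trans (leq_add H1 H2) _; lia.
Qed.

Lemma size_nb_l : size (nodes_below K (nrm sep K l)) <= d + d * Bn.
Proof.
apply: leq_trans (uniq_leq_size (nodes_below_uniq _ _) nb_nrm_l) _.
rewrite size_cat; have := size_Lab; have := h3; rewrite /Unl /Sb /Lab => H1 H2.
exact: leq_add H1 H2.
Qed.

Lemma nb_r_l : {subset nodes_below K (nrm sep K r) <= nodes_below K (nrm sep K l)}.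
Proof.
move=> w /mem_nodes_below [v vn wv].
case e: (lab K r) => [g|]; last by move: vn; rewrite /nrm e.
have [u un uv] := pt_nrm hsep hprec wfr cr ptr (rnK wfr) (rch_refl _ _) e vn.
apply/mem_nodes_below; exists u => //.
by move/mem_subP: wv => [wn vw]; apply/mem_subP; split => //; apply: rch_trans vw.
Qed.

Lemma size_sub_r_inf : gsize (sub K r) <= 2 + 2 * d + 2 * (d * Bn).
Proof.
apply: leq_trans h4 _.
have := uniq_leq_size (nodes_below_uniq _ _) nb_r_l => h.
apply: leq_trans (leq_add size_sub_l (leq_trans h size_nb_l)) _.
lia.
Qed.

End RuleSize.

Lemma index_map_in (f : nat -> nat) (s : seq nat) x : {in s &, injective f} -> x \in s ->
  index (f x) (map f s) = index x s.
Proof.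
elim: s => [|y s IH] //= inj; rewrite inE => /orP [/eqP-> | xs]; first by rewrite !eqxx.
case: eqP => [e | ne].
  by rewrite (inj x y) ?eqxx // ?inE ?xs ?eqxx ?orbT.
case: eqP => [exy | _]; first by rewrite exy in ne.
congr S; apply: IH xs => u v us vs; apply: inj; by rewrite inE ?us ?vs orbT.
Qed.

Lemma rch_inv_pres (F : finType) (H : lgraph F) (Q : nat -> Prop) v w :
  (forall x y, Q x -> y \in succs H x -> Q y) -> Q v -> rch H v w -> Q w.
Proof.
move=> hQ qv [p]; elim: p v qv => [|y p IH] v qv /=; first by move=> _ <-.
by case/andP => e pp pl; apply: IH pp pl; apply: hQ qv e.
Qed.

Lemma sum_le_size (T : eqType) (s : seq T) (Fn : T -> nat) c :
  (forall z, z \in s -> Fn z <= c) -> \sum_(z <- s) Fn z <= size s * c.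
Proof.
elim: s => [|y s IH] h; first by rewrite big_nil.
rewrite big_cons /= mulSn leq_add ?h ?inE ?eqxx //.
by apply: IH => z zs; apply: h; rewrite inE zs orbT.
Qed.

Lemma sum_sub_pred (T : eqType) (s : seq T) (P Q : pred T) (Fn : T -> nat) :
  (forall x, x \in s -> P x -> Q x) -> \sum_(x <- s | P x) Fn x <= \sum_(x <- s | Q x) Fn x.
Proof.
move=> h; rewrite big_mkcond [X in _ <= X]big_mkcond big_seq [X in _ <= X]big_seq.
apply: leq_sum => x xs; case: ifP => // Px; by rewrite h.
Qed.

Section Global.
Variables (F : finType) (ar : F -> nat) (isC : pred F) (GRS : rule F -> Prop)
  (sep : F -> nat -> bool) (prec : rel F) (d : nat).
Hypothesis hgrs : forall ru, GRS ru -> wf_rule ar ru /\ constructor_rule isC ru.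
Hypothesis hsep : separation isC sep.
Hypothesis hprec : precedence isC prec.
Hypothesis hpt : forall ru, GRS ru -> pt sep prec (rK ru) (rr ru) (rl ru).
Hypothesis hard : forall f, ar f <= d.
Hypothesis hfin : forall ru, GRS ru -> ~ in_G_inf GRS ru -> gsize (sub (rK ru) (rr ru)) <= d.
Hypothesis hinf : forall ru, GRS ru -> in_G_inf GRS ru ->
     let K := rK ru in
     [/\ max_shared (cap_nrm sep (sub K (rl ru))),
         (forall v, v \in nrm sep K (rl ru) -> lab K v <> None -> gclosed (sub K v)),
         size (undup ([seq v <- nrm sep K (rl ru) | lab K v == None]
                      ++ nodes_below K (safe sep K (rl ru)))) <= d
       & gsize (sub K (rr ru)) <=
           gsize (sub K (rl ru)) + size (nodes_below K (nrm sep K (rr ru)))].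

Variable n : nat.

Definition R := #|F|.
Definition rank (g : F) := #|[pred h | prec h g]|.
Definition Bn := n + R * d.
Definition B := 3 + 2 * d + 2 * (d * Bn).
Definition wt (o : option F) := if o is Some g then (if isC g then 0 else B ^ rank g) else 0.
Definition Phi (G : tgraph F) := \sum_(x <- nodes (tg G)) wt (lab (tg G) x).
Definition bnd (g : F) := n + (R - rank g) * d.

Definition I4 (G : lgraph F) := forall x g, x \in nodes G -> lab G x = Some g ->
  forall v, v \in nrm sep G x ->
    (forall w c, w \in nodes G -> rch G v w -> lab G w = Some c -> isC c) /\
    gsize (sub G v) <= bnd g.

Definition Inv (G : tgraph F) :=
  [/\ uniq (nodes (tg G)), I2 (tg G),
      exists ht : nat -> nat, forall x y, x \in nodes (tg G) -> y \in att (tg G) x -> ht y < ht x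
    & I4 (tg G)].

Lemma rank_lt h g : prec h g -> rank h < rank g.
Proof.
move=> hg; apply: proper_card; apply/properP; split.
  apply/subsetP => x; rewrite !inE => xh.
  by case: hprec => _ tr _ _; apply: tr xh hg.
by exists h; rewrite !inE ?hg //; case: hprec => irr _ _ _; rewrite irr.
Qed.

Lemma rank_le g : rank g <= R.
Proof. exact: max_card. Qed.

Lemma B_gt0 : 0 < B. Proof. by rewrite /B. Qed.

Lemma B_gt_d : d < B. Proof. rewrite /B; lia. Qed.


Section OneStep.
Variable G : tgraph F.
Hypothesis uniqG : uniq (nodes (tg G)).
Hypothesis I2G : I2 (tg G).
Variable ht : nat -> nat.
Hypothesis hht : forall x y, x \in nodes (tg G) -> y \in att (tg G) x -> ht y < ht x.
Hypothesis I4G : I4 (tg G).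
Variables (ru : rule F) (phi iota : nat -> nat).
Hypothesis gru : GRS ru.
Hypothesis hh : hom (rK ru) (rl ru) (tg G) phi.
Hypothesis iinj : forall v w, v \in nodes (tg (sub (rK ru) (rr ru))) ->
                     w \in nodes (tg (sub (rK ru) (rr ru))) ->
                     lab (rK ru) v <> None -> lab (rK ru) w <> None ->
                     iota v = iota w -> v = w.
Hypothesis ifresh : forall v, v \in nodes (tg (sub (rK ru) (rr ru))) -> lab (rK ru) v <> None ->
                   iota v \notin nodes (tg G).

Let wfr := (hgrs gru).1.
Let cr := (hgrs gru).2.
Let ptr := hpt gru.
Local Notation K := (rK ru).
Local Notation l := (rl ru).
Local Notation r := (rr ru).

Let Lr := [seq v <- nodes (tg (sub K r)) | lab K v != None].
Let img v := if lab K v is Some _ then iota v else phi v.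
Let newn := map iota Lr.
Let pre x := nth 0 Lr (index x newn).
Let labB x := if x \in newn then lab K (pre x) else lab (tg G) x.
Let attB x := if x \in newn then map img (att K (pre x)) else att (tg G) x.
Let a := phi l.
Let b := img r.
Let red y := if y == a then b else y.
Let C := LGraph (nodes (tg G) ++ newn) labB (fun x => map red (attB x)).
Let root' := red (troot G).

Lemma RR_eq : rewrite_result G ru phi iota = sub C root'.
Proof. by []. Qed.

Lemma Lr_sub z : z \in Lr -> z \in nodes (tg (sub K r)) /\ lab K z <> None.
Proof. by rewrite mem_filter => /andP [/eqP]. Qed.

Lemma Lr_uniq : uniq Lr.
Proof. by rewrite filter_uniq // filter_uniq // (uniqK wfr). Qed.

Lemma iinjL : {in Lr &, injective iota}.
Proof. by move=> x y /Lr_sub [xs xl] /Lr_sub [ys yl]; apply: iinj. Qed.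

Lemma pre_iota z : z \in Lr -> pre (iota z) = z.
Proof. by move=> zL; rewrite /pre /newn (index_map_in iinjL zL) nth_index. Qed.

Lemma iota_notG z : z \in Lr -> iota z \notin nodes (tg G).
Proof. by move=> /Lr_sub [zs zl]; apply: ifresh. Qed.

Lemma newn_notG x : x \in nodes (tg G) -> x \notin newn.
Proof. by move=> xG; apply/mapP => -[z zL e]; subst x; rewrite (negPf (iota_notG zL)) in xG. Qed.

Lemma iota_newn z : z \in Lr -> iota z \in newn.
Proof. exact: map_f. Qed.

Lemma labC_new z : z \in Lr -> lab C (iota z) = lab K z.
Proof. by move=> zL; rewrite /= /labB iota_newn // pre_iota. Qed.

Lemma attC_new z : z \in Lr -> att C (iota z) = map red (map img (att K z)).
Proof. by move=> zL; rewrite /= /attB iota_newn // pre_iota. Qed.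

Lemma labC_old x : x \in nodes (tg G) -> lab C x = lab (tg G) x.
Proof. by move=> xG; rewrite /= /labB (negPf (newn_notG xG)). Qed.

Lemma attC_old x : x \in nodes (tg G) -> att C x = map red (att (tg G) x).
Proof. by move=> xG; rewrite /= /attB (negPf (newn_notG xG)). Qed.

Lemma l_in_subl : l \in nodes (tg (sub K l)).
Proof. by rewrite mem_subn (lnK wfr) reachb_refl. Qed.

Lemma a_in : a \in nodes (tg G).
Proof. by case: (hh l_in_subl). Qed.

Lemma haG f : lab K l = Some f -> lab (tg G) a = Some f /\ att (tg G) a = map phi (att K l).
Proof. by move=> e; case: (hh l_in_subl) => _ /(_ f e). Qed.

Lemma ht_rch x y : x \in nodes (tg G) -> rch (tg G) x y -> ht y <= ht x.
Proof.
move=> xn [p]; elim: p x xn => [|z p IH] x xn /=; first by move=> _ <-.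
case/andP => e pp pl; move: e; rewrite /edge succsE // => zx.
have zn : z \in nodes (tg G) by exact (I2G xn zx).
by apply: leq_trans (IH z zn pp pl) (ltnW (hht xn zx)).
Qed.

Lemma desc_a z : z \in nodes (tg (sub K l)) -> z <> l -> ht (phi z) < ht a.
Proof.
move=> /mem_subP [zn lz] zl; case: (rch_inv lz) => [// | [c cs cz]].
rewrite succsE ?(lnK wfr) // in cs.
case: (lroot cr) => f lf _; have [_ attl] := haG lf.
have pca : phi c \in att (tg G) a by rewrite attl map_f.
have cl := att_l_in_sub wfr cs.
have [pcz _] := hom_reach wfr hh cl cz.
apply: leq_ltn_trans (hht a_in pca).
by apply: ht_rch pcz; exact (I2G a_in pca).
Qed.

Lemma b_neq_a : b != a.
Proof.
rewrite /b /img; case e: (lab K r) => [g|].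
  have rL : r \in Lr by rewrite mem_filter e mem_subn (rnK wfr) reachb_refl.
  by apply/eqP => ea; have := iota_notG rL; rewrite ea a_in.
have rl : r \in nodes (tg (sub K l)).
  by apply: (unl_r_in_l wfr) e; rewrite mem_subn (rnK wfr) reachb_refl.
have := desc_a rl (nesym (lr_neq wfr)).
by apply: contraTneq => ->; rewrite ltnn.
Qed.

Lemma red_ne_a y : red y != a.
Proof. rewrite /red; case: ifP => [_ | /negbT //]; exact: b_neq_a. Qed.

Lemma a_notRR : a \notin nodes (tg (sub C root')).
Proof.
rewrite mem_subn negb_and; apply/orP; right; apply/negP => /reachbP h.
case: (rch_inv_last h) => [e | [w _ aw]].
  by have := red_ne_a (troot G); rewrite -/root' e eqxx.
move: aw; rewrite /succs; case: ifP => // _ /= /mapP [y _ e].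
by have := red_ne_a y; rewrite -e eqxx.
Qed.

Lemma uniqC : uniq (nodes C).
Proof.
rewrite /= cat_uniq uniqG /newn (map_inj_in_uniq iinjL) Lr_uniq /= andbT.
by apply/hasP => -[x xn xG]; have := newn_notG xG; rewrite xn.
Qed.

Lemma mem_C x : (x \in nodes C) = (x \in nodes (tg G)) || (x \in newn).
Proof. by rewrite /= mem_cat. Qed.

Lemma K1 z z' : z \in Lr -> z' \in att K z ->
  [/\ z' \in nodes (tg (sub K r)), rch K z z',
      (lab K z' <> None -> z' \in Lr)
    & (lab K z' = None -> z' \in nodes (tg (sub K l)) /\ z' <> l)].
Proof.
move=> zL zz; have [/mem_subP [zn rz] _] := Lr_sub zL.
have z'n : z' \in nodes K by exact (I2K' wfr zn zz).
have zz' : rch K z z' by apply: rch_step (rch_refl _ _); rewrite succsE.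
have z'r : z' \in nodes (tg (sub K r)) by apply/mem_subP; split => //; apply: rch_trans zz'.
split => //.
  by move=> lz; rewrite mem_filter z'r andbT; apply/eqP.
move=> lz; split; first exact: (unl_r_in_l wfr) lz.
by move=> e; subst z'; case: (lroot cr) => f lf _; rewrite lf in lz.
Qed.

Lemma img_props z z' : z \in Lr -> z' \in att K z ->
  red (img z') = img z' /\
  ((exists2 e, lab K z' = Some e & img z' = iota z' /\ z' \in Lr) \/
   (lab K z' = None /\ img z' = phi z' /\ phi z' \in nodes (tg G) /\ ht (phi z') < ht a)).
Proof.
move=> zL zz; have [_ _ hL hU] := K1 zL zz.
rewrite /img; case e: (lab K z') => [g|].
  have z'L : z' \in Lr by apply: hL; rewrite e.
  split; last by left; exists g.
  rewrite /red; case: eqP => // ea; have := iota_notG z'L; by rewrite ea a_in.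
have [z'l z'ne] := hU e.
have hlt := desc_a z'l z'ne.
have pn : phi z' \in nodes (tg G) by case: (hh z'l).
split; last by right.
rewrite /red; case: eqP => // ea; by rewrite ea ltnn in hlt.
Qed.

Lemma b_inC : b \in nodes C.
Proof.
rewrite mem_C /b /img; case e: (lab K r) => [g|].
  by apply/orP; right; apply: iota_newn; rewrite mem_filter e mem_subn (rnK wfr) reachb_refl.
have rl : r \in nodes (tg (sub K l)) by apply: (unl_r_in_l wfr) e; rewrite mem_subn (rnK wfr) reachb_refl.
by case: (hh rl) => -> _.
Qed.

Lemma succC x y : y \in succs C x ->
  (x \in nodes (tg G) /\ exists2 y', y' \in att (tg G) x & y = red y') \/
  (exists2 z, z \in Lr & x = iota z /\ exists2 z', z' \in att K z & y = img z').
Proof.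
rewrite /succs; case: ifP => // xC; rewrite mem_C in xC.
case/orP: xC => [xG | /mapP [z zL ->]].
  by rewrite attC_old // => /mapP [y' y'a ->]; left; split => //; exists y'.
rewrite attC_new // -map_comp => /mapP [z' z'a ->]; right; exists z => //; split => //.
by exists z' => //=; case: (img_props zL z'a).
Qed.

Lemma I2C x y : x \in nodes C -> y \in att C x -> y \in nodes C.
Proof.
move=> xC yx; have : y \in succs C x by rewrite succsE.
case/succC => [[xG [y' y'a ->]] | [z zL [_ [z' z'a ->]]]].
  rewrite /red; case: eqP => _; first exact: b_inC.
  by rewrite mem_C (I2G xG y'a).
have [_ [[e _ [-> z'L]] | [_ [-> [pn _]]]]] := img_props zL z'a.
  by rewrite mem_C iota_newn ?orbT.
by rewrite mem_C pn.
Qed.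

Lemma rch_sub_base (H : lgraph F) s v w : rch (tg (sub H s)) v w -> rch H v w.
Proof.
case=> p; elim: p v => [|y p IH] v /=; first by move=> _ <-; exact: rch_refl.
case/andP => e pp pl; have := edge_src e; rewrite mem_subn => /andP [vn _].
apply: rch_step (IH y pp pl); move: e; rewrite /edge /succs /=.
by rewrite mem_filter; case: ifP => // /andP [_ ->].
Qed.

Lemma I2RR : I2 (tg (sub C root')).
Proof.
move=> x /mem_subP [xC rx] y yx; apply/mem_subP; split; first exact: I2C xC yx.
by apply: rch_trans rx _; apply: rch_step (rch_refl _ _); rewrite succsE.
Qed.

Lemma uniqRR : uniq (nodes (tg (sub C root'))).
Proof. exact: filter_uniq uniqC. Qed.

Lemma Lr_gsize z : z \in Lr -> 0 < gsize (sub K z) <= gsize (sub K r).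
Proof.
move=> /Lr_sub [/mem_subP [zn rz] _]; rewrite gsize_ge1 //=.
exact: gsize_mono (uniqK wfr) rz.
Qed.

Lemma htRR : exists ht' : nat -> nat, forall x y, x \in nodes (tg (sub C root')) ->
  y \in att (tg (sub C root')) x -> ht' y < ht' x.
Proof.
pose D := (gsize (sub K r)).+1.
exists (fun x => if x \in newn then D * ht a + gsize (sub K (pre x)) else D * (ht x).+1).
move=> x y /mem_subP [xC _] yx.
have : y \in succs C x by rewrite succsE.
case/succC => [[xG [y' y'a ->]] | [z zL [-> [z' z'a ->]]]].
  rewrite (negPf (newn_notG xG)) /red; case: eqP => [ey' | ne].
    subst y'; have hax := hht xG y'a.
    rewrite /b /img; case e: (lab K r) => [g|].
      have rL : r \in Lr by rewrite mem_filter e mem_subn (rnK wfr) reachb_refl.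
      rewrite iota_newn // pre_iota //.
      have : gsize (sub K r) < D by [].
      move: hax; rewrite /D; nia.
    have rl : r \in nodes (tg (sub K l)) by apply: (unl_r_in_l wfr) e; rewrite mem_subn (rnK wfr) reachb_refl.
    have hr := desc_a rl (nesym (lr_neq wfr)).
    have pn : phi r \in nodes (tg G) by case: (hh rl).
    rewrite (negPf (newn_notG pn)); move: hax hr; rewrite /D; nia.
  have y'G := I2G xG y'a.
  rewrite (negPf (newn_notG y'G)); have := hht xG y'a; rewrite /D; nia.
rewrite iota_newn // pre_iota //.
have [zs zl] := Lr_sub zL.
have /andP [g1 _] := Lr_gsize zL.
have [_ [[e _ [-> z'L]] | [_ [-> [pn hlt]]]]] := img_props zL z'a.
  rewrite iota_newn // pre_iota //.
  have := gsize_lt (uniqK wfr) (acK wfr) (x := z) (y := z'); move/mem_subP: zs => [zn _].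
  move/(_ zn z'a); lia.
rewrite (negPf (newn_notG pn)); move: hlt g1; rewrite /D; nia.
Qed.

Lemma lab_l : exists2 f, lab K l = Some f & ~~ isC f.
Proof. exact: lroot cr. Qed.

Lemma phiu_nrm u f : u \in nrm sep K l -> lab K l = Some f -> phi u \in nrm sep (tg G) a.
Proof.
move=> un lf; have [la aa] := haG lf.
by rewrite (nrm_map (G := K) (x := l) _ (h := phi)) ?map_f // la lf.
Qed.

Lemma regu u f : u \in nrm sep K l -> lab K l = Some f -> ~~ isC f ->
  [/\ forall w c, w \in nodes (tg G) -> rch (tg G) (phi u) w -> lab (tg G) w = Some c -> isC c,
      gsize (sub (tg G) (phi u)) <= bnd f,
      phi u \in nodes (tg G)
    & forall w, rch (tg G) (phi u) w -> w != a].
Proof.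
move=> un lf nC; have [la aa] := haG lf.
have [cr' sz] := I4G a_in la (phiu_nrm un lf).
have pn : phi u \in nodes (tg G) by case: (hh (att_l_in_sub wfr (mem_nrm un))).
split => // w uw; apply/eqP => ew; subst w.
by have := cr' a f a_in uw la; rewrite (negPf nC).
Qed.

Lemma reg_old v : v \in nodes (tg G) -> (forall w, rch (tg G) v w -> w != a) ->
  forall w, rch C v w -> rch (tg G) v w.
Proof.
move=> vn noa w; apply: (rch_inv_pres (Q := rch (tg G) v)); last exact: rch_refl.
move=> x y vx; have xG := rch_nodes I2G vn vx.
rewrite succsE ?mem_C ?xG // attC_old // => /mapP [y' y'a ->].
have vy' : rch (tg G) v y' by apply: rch_trans vx _; apply: rch_step (rch_refl _ _); rewrite succsE.
by rewrite /red (negPf (noa _ vy')).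
Qed.

Lemma reg_new u y : u \in nrm sep K l -> rch K u y -> y \in nodes (tg (sub K r)) ->
  forall w, rch C (img y) w ->
  (exists2 z1, z1 \in Lr & rch K y z1 /\ w = iota z1) \/
  (exists z1, [/\ z1 \in nodes K, rch K y z1, lab K z1 = None & rch (tg G) (phi z1) w]).
Proof.
move=> un uy yr.
have [f lf nC] := lab_l.
have [_ _ _ noa] := regu un lf nC.
have ul := att_l_in_sub wfr (mem_nrm un).
have hz1 : forall z1, rch K y z1 -> z1 \in nodes K -> z1 \in nodes (tg (sub K l)) /\ rch (tg G) (phi u) (phi z1).
  move=> z1 yz zn; have uz := rch_trans uy yz.
  by have [h1 h2] := hom_reach wfr hh ul uz.
move=> w; apply: (rch_inv_pres (Q := fun w => (exists2 z1, z1 \in Lr & rch K y z1 /\ w = iota z1) \/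
  (exists z1, [/\ z1 \in nodes K, rch K y z1, lab K z1 = None & rch (tg G) (phi z1) w]))); last first.
  rewrite /img; case e: (lab K y) => [g|].
    by left; exists y; [rewrite mem_filter e yr | split => //; exact: rch_refl].
  by right; exists y; split => //; [by case/mem_subP: yr | exact: rch_refl | exact: rch_refl].
move=> x x' [[z1 z1L [yz1 ex]] | [z1 [z1n yz1 lz1 gx]]] e.
  subst x; rewrite succsE ?mem_C ?iota_newn ?orbT // attC_new // -map_comp in e.
  case/mapP: e => z' z'a -> /=; have [-> hz] := img_props z1L z'a.
  have [_ z1z' _ _] := K1 z1L z'a.
  have yz' := rch_trans yz1 z1z'.
  case: hz => [[e' _ [-> z'L]] | [lz' [-> _]]]; first by left; exists z'.
  right; exists z'; split => //; last exact: rch_refl.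
  by have [/mem_subP []] := K1 z1L z'a.
have [z1l uz1] := hz1 z1 yz1 z1n.
have pz1 : phi z1 \in nodes (tg G) by case: (hh z1l).
have xG := rch_nodes I2G pz1 gx.
rewrite succsE ?mem_C ?xG // attC_old // in e; case/mapP: e => x'' x''a ->.
have gx'' : rch (tg G) (phi z1) x'' by apply: rch_trans gx _; apply: rch_step (rch_refl _ _); rewrite succsE.
rewrite /red (negPf (noa _ (rch_trans uz1 gx''))).
by right; exists z1.
Qed.

Lemma bnd_mono g f : rank g < rank f -> bnd f + d <= bnd g.
Proof.
move=> lt; have := rank_le f; rewrite /bnd => le.
have h : (R - rank f).+1 <= R - rank g by lia.
have := leq_mul h (leqnn d); rewrite mulSn; lia.
Qed.

Lemma sub_filter_mem (H : lgraph F) s v w :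
  w \in nodes (tg (sub (tg (sub H s)) v)) -> w \in nodes H /\ rch H v w /\ rch H s w.
Proof.
move=> /mem_subP [/mem_subP [wn sw] vw]; split => //; split => //.
exact: rch_sub_base vw.
Qed.

Lemma I4RR : I4 (tg (sub C root')).
Proof.
move=> x g /mem_subP [xC rx] lx v vx.
have [f lf nC] := lab_l.
have lax := haG lf.
rewrite mem_C in xC; case/orP: xC => [xG | /mapP [z zL exz]].
-
  have xa : x != a.
    apply/eqP => e; have := a_notRR; rewrite -e mem_subn mem_C xG /=.
    by move/negP; apply; apply/reachbP.
  have lxG : lab (tg G) x = Some g by rewrite -labC_old.
  have hn : nrm sep (tg (sub C root')) x = map red (nrm sep (tg G) x).
    by apply: nrm_map; [exact: labC_old | exact: attC_old].
  rewrite hn in vx; case/mapP: vx => v' v'n ->.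
  have v'G : v' \in nodes (tg G) by exact (I2G xG (mem_nrm v'n)).
  have [crg szg] := I4G xG lxG v'n.
  have noa : forall w, rch (tg G) v' w -> w != a.
    move=> w vw; apply/eqP => ew; subst w.
    by have := crg a f a_in vw lax.1; rewrite (negPf nC).
  have rv : red v' = v' by rewrite /red (negPf (noa _ (rch_refl _ _))).
  rewrite rv; split.
    move=> w c /mem_subP [wC _] vw lw.
    have vwG := reg_old v'G noa (rch_sub_base vw).
    have wG := rch_nodes I2G v'G vwG.
    by apply: (crg _ _ wG vwG); rewrite -(labC_old wG); exact: lw.
  apply: leq_trans szg; apply: uniq_leq_size; first by rewrite filter_uniq // uniqRR.
  move=> w /sub_filter_mem [wC [vw _]]; have vwG := reg_old v'G noa vw.
  by apply/mem_subP; split => //; exact: rch_nodes I2G v'G vwG.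
-
  subst x.
  have [zs lz0] := Lr_sub zL; have [zn rz] := mem_subP _ _ _ zs.
  have lzK : lab K z = Some g by rewrite -labC_new.
  have hn : nrm sep (tg (sub C root')) (iota z) = map (fun y => red (img y)) (nrm sep K z).
    by apply: nrm_map; [exact: labC_new | rewrite attC_new // -map_comp].
  rewrite hn in vx; case/mapP: vx => y yn ->.
  have ya := mem_nrm yn.
  have [-> _] := img_props zL ya.
  have [u un uy] := pt_nrm hsep hprec wfr cr ptr zn rz lzK yn.
  have [yr _ _ _] := K1 zL ya.
  have [f' lf' pgf] := pt_lab_below ptr zs lzK.
  rewrite lf in lf'; case: lf' => ef; subst f'.
  have rgf := rank_lt pgf.
  have bm := bnd_mono rgf.
  have [crG szG pun noa] := regu un lf nC.
  have ul := mem_nrm un.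
  split.
    move=> w c /mem_subP [wC _] vw lw.
    case: (reg_new un uy yr (rch_sub_base vw)) => [[z1 z1L [yz1 ew]] | [z1 [z1n yz1 lz1 gw]]].
      subst w; rewrite /= -/(labB (iota z1)) in lw.
      have := labC_new z1L; rewrite /= => e; rewrite e in lw.
      have [/mem_subP [z1n _] _] := Lr_sub z1L.
      exact: (creg_constr wfr cr ul z1n (rch_trans uy yz1) lw).
    have z1l : z1 \in nodes (tg (sub K l)).
      by apply/mem_subP; split => //; apply: rch_trans (rch_trans uy yz1); move/mem_subP: (att_l_in_sub wfr ul) => [].
    have pz1 : phi z1 \in nodes (tg G) by case: (hh z1l).
    have [_ uz1] := hom_reach wfr hh (att_l_in_sub wfr ul) (rch_trans uy yz1).
    have [uz1' _] := hom_reach wfr hh (att_l_in_sub wfr ul) (rch_trans uy yz1).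
    have wG := rch_nodes I2G pz1 gw.
    apply: (crG _ _ wG (rch_trans uz1' gw)).
    by rewrite -(labC_old wG); exact: lw.
  have szLr : size Lr <= gsize (sub K r) by rewrite size_filter count_size.
  case: (classic (in_G_inf GRS ru)) => hi.
    have [ms clo _ _] := hinf gru hi.
    case eu: (lab K u) => [gu|].
      have uclo : gclosed (sub K u) by apply: (clo u un); rewrite eu.
      have hsub : {subset nodes (tg (sub (tg (sub C root')) (img y))) <= map iota [seq z1 <- Lr | reachb K u z1]}.
        move=> w /sub_filter_mem [_ [vw _]].
        case: (reg_new un uy yr vw) => [[z1 z1L [yz1 ->]] | [z1 [z1n yz1 lz1 _]]].
          by apply: map_f; rewrite mem_filter z1L andbT; apply/reachbP; exact: rch_trans uy yz1.
        have : z1 \in nodes (tg (sub K u)) by apply/mem_subP; split => //; exact: rch_trans uy yz1.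
        by move/uclo; rewrite lz1.
      apply: leq_trans (uniq_leq_size (filter_uniq _ uniqRR) hsub) _.
      rewrite size_map; apply: leq_trans (leq_trans _ (size_Ku wfr cr hh un uclo ms)) _.
        apply: uniq_leq_size; first by rewrite filter_uniq // Lr_uniq.
        move=> z1; rewrite mem_filter => /andP [uz1 /Lr_sub [/mem_subP [z1n _] _]].
        by rewrite mem_subn z1n.
      by apply: leq_trans szG _; apply: leq_trans bm; rewrite leq_addr.
    have unK : u \in nodes K by exact (I2K' wfr (lnK wfr) ul).
    have hsub : {subset nodes (tg (sub (tg (sub C root')) (img y))) <= [seq w <- nodes (tg G) | reachb (tg G) (phi u) w]}.
      move=> w /sub_filter_mem [_ [vw _]].
      have yu : y = u by apply: rch_noatt uy; exact (unlK wfr unK eu).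
      case: (reg_new un uy yr vw) => [[z1 z1L [yz1 _]] | [z1 [z1n yz1 lz1 gw]]].
        have e1 : z1 = u by apply: rch_noatt (rch_trans uy yz1); exact (unlK wfr unK eu).
        by have [_] := Lr_sub z1L; rewrite e1 eu.
      have e1 : z1 = u by apply: rch_noatt (rch_trans uy yz1); exact (unlK wfr unK eu).
      subst z1; rewrite mem_filter; apply/andP; split; first by apply/reachbP.
      exact: rch_nodes I2G pun gw.
    apply: leq_trans (uniq_leq_size (filter_uniq _ uniqRR) hsub) _.
    by apply: leq_trans szG _; apply: leq_trans bm; rewrite leq_addr.
  have hsub : {subset nodes (tg (sub (tg (sub C root')) (img y))) <=
      map iota [seq z1 <- Lr | reachb K y z1] ++ [seq w <- nodes (tg G) | reachb (tg G) (phi u) w]}.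
    move=> w /sub_filter_mem [_ [vw _]]; rewrite mem_cat.
    case: (reg_new un uy yr vw) => [[z1 z1L [yz1 ->]] | [z1 [z1n yz1 lz1 gw]]].
      by rewrite map_f // mem_filter z1L andbT; apply/reachbP.
    have z1l : z1 \in nodes (tg (sub K l)).
      by apply/mem_subP; split => //; apply: rch_trans (rch_trans uy yz1); move/mem_subP: (att_l_in_sub wfr ul) => [].
    have pz1 : phi z1 \in nodes (tg G) by case: (hh z1l).
    have [uz1' _] := hom_reach wfr hh (att_l_in_sub wfr ul) (rch_trans uy yz1).
    apply/orP; right; rewrite mem_filter; apply/andP; split; first by apply/reachbP; exact: rch_trans uz1' gw.
    exact: rch_nodes I2G pz1 gw.
  apply: leq_trans (uniq_leq_size (filter_uniq _ uniqRR) hsub) _.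
  rewrite size_cat size_map; apply: leq_trans bm.
  rewrite (addnC (bnd f)); apply: leq_add; last exact szG.
  apply: leq_trans (hfin gru hi); apply: leq_trans szLr.
  by rewrite size_filter count_size.
Qed.

Lemma Bn_bound f : bnd f <= Bn.
Proof. rewrite /bnd /Bn leq_add2l; apply: leq_mul => //; exact: leq_subr. Qed.

Lemma sizeLr_B : size Lr < B.
Proof.
have szLr : size Lr <= gsize (sub K r) by rewrite size_filter count_size.
apply: leq_ltn_trans szLr _.
case: (classic (in_G_inf GRS ru)) => hi; last exact: leq_ltn_trans (hfin gru hi) B_gt_d.
have [ms clo h3 h4] := hinf gru hi.
have [f lf nC] := lab_l.
have hbn : forall u, u \in nrm sep K l -> lab K u <> None -> gsize (sub (tg G) (phi u)) <= Bn.
  by move=> u un _; have [_ sz _ _] := regu un lf nC; apply: leq_trans sz (Bn_bound f).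
apply: leq_ltn_trans (size_sub_r_inf hsep hprec wfr cr ptr hh hard hbn ms clo h3 h4) _.
by rewrite /B.
Qed.

Lemma created_lt f : lab K l = Some f -> \sum_(z <- Lr) wt (lab K z) < B ^ rank f.
Proof.
move=> lf.
have hw : forall z, z \in Lr -> wt (lab K z) <= B ^ (rank f).-1 /\ 0 < rank f.
  move=> z zL; have [zs lz] := Lr_sub zL.
  case e: (lab K z) => [g|]; last by [].
  have [f' lf' pgf] := pt_lab_below ptr zs e.
  rewrite lf in lf'; case: lf' => ef; subst f'.
  have rgf := rank_lt pgf; split; last by apply: leq_ltn_trans rgf.
  rewrite /wt; case: (isC g) => //; apply: leq_pexp2l; first exact: B_gt0.
  by rewrite -ltnS (ltn_predK rgf).
case eL: Lr => [|z0 s].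
  by rewrite big_nil expn_gt0 B_gt0.
have z0L : z0 \in Lr by rewrite eL inE eqxx.
have rf := (hw z0 z0L).2.
rewrite -eL; apply: leq_ltn_trans (sum_le_size (c := B ^ (rank f).-1) _) _.
  by move=> z zL; case: (hw z zL).
rewrite -{2}(prednK rf) expnS ltn_mul2r sizeLr_B andbT expn_gt0 B_gt0 //.
Qed.

Lemma PhiRR : Phi (rewrite_result G ru phi iota) < Phi G.
Proof.
rewrite RR_eq /Phi /= big_filter.
have [f lf nC] := lab_l.
have [la _] := haG lf.
apply: (@leq_ltn_trans (\sum_(x <- nodes C | x != a) wt (labB x))).
  apply: sum_sub_pred => x xC rx; apply/eqP => e.
  by move: a_notRR; rewrite mem_subn -e xC rx.
rewrite big_cat /= (bigD1_seq a a_in uniqG) /= la /wt (negPf nC) -/wt.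
change (\sum_(i <- nodes (tg G) | i != a) wt (labB i) + \sum_(i <- newn | i != a) wt (labB i) <
  B ^ rank f + \sum_(i <- nodes (tg G) | i != a) wt (lab (tg G) i)).
have e1 : \sum_(i <- nodes (tg G) | i != a) wt (labB i) = \sum_(i <- nodes (tg G) | i != a) wt (lab (tg G) i).
  rewrite big_seq_cond [RHS]big_seq_cond; apply: eq_bigr => i /andP [iG _].
  by have := labC_old iG => /= ->.
have e2 : \sum_(i <- newn | i != a) wt (labB i) <= \sum_(z <- Lr) wt (lab K z).
  apply: leq_trans (_ : \sum_(i <- newn) wt (labB i) <= _).
    by rewrite big_mkcond /=; apply: leq_sum => i _; case: ifP.
  rewrite big_map big_seq [X in _ <= X]big_seq; apply: eq_leq; apply: eq_bigr => z zL.
  by have := labC_new zL => /= ->.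
rewrite e1 [X in X < _]addnC ltn_add2r; exact: leq_ltn_trans e2 (created_lt lf).
Qed.

Lemma gsizeRR : gsize (rewrite_result G ru phi iota) <= gsize G + B.
Proof.
rewrite RR_eq /gsize /= size_filter; apply: leq_trans (count_size _ _) _.
by rewrite size_cat size_map leq_add2l ltnW // sizeLr_B.
Qed.

Lemma InvRR : Inv (rewrite_result G ru phi iota).
Proof.
rewrite RR_eq; split; [exact: uniqRR | exact: I2RR | exact: htRR | exact: I4RR].
Qed.

End OneStep.

Lemma tg_eq_succs (H H' : tgraph F) : tg_eq H H' -> forall x, succs (tg H) x = succs (tg H') x.
Proof.
case=> _ pm hl x; rewrite /succs -(perm_mem pm); case: ifP => // xn.
by case: (hl x xn).
Qed.

Lemma tg_eq_rch (H H' : tgraph F) : tg_eq H H' -> forall v w, rch (tg H) v w <-> rch (tg H') v w.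
Proof.
move=> teq v w; have e : edge (tg H) =2 edge (tg H') by move=> x y; rewrite /edge (tg_eq_succs teq).
by split => -[p pp pl]; exists p => //; move: pp; rewrite (eq_path e).
Qed.

Lemma tg_eq_inv (H H' : tgraph F) : tg_eq H H' -> Inv H' ->
  [/\ Inv H, Phi H = Phi H' & gsize H = gsize H'].
Proof.
move=> teq [u2 i2 [ht hht] i4]; have [_ pm hl] := teq.
have mem x : (x \in nodes (tg H)) = (x \in nodes (tg H')) by apply: perm_mem.
have rb v w : reachb (tg H) v w = reachb (tg H') v w.
  have := tg_eq_rch teq v w.
  by case: (reachbP (tg H) v w) => h1; case: (reachbP (tg H') v w) => h2 //; tauto.
have gs v : gsize (sub (tg H) v) = gsize (sub (tg H') v).
  rewrite /gsize /= (eq_filter (a2 := reachb (tg H') v)); last by move=> w; rewrite rb.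
  by apply: perm_size; apply: perm_filter.
split.
- split.
  + by rewrite (perm_uniq pm).
  + move=> x xn y yx; have [_ ea] := hl x xn; rewrite mem.
    have xn' : x \in nodes (tg H') by rewrite -mem.
    by apply: (i2 x xn'); rewrite -ea.
  + exists ht => x y xn yx; have [_ ea] := hl x xn; apply: hht; first by rewrite -mem.
    by rewrite -ea.
  + move=> x g xn lx v vx; have [la ea] := hl x xn.
    have vx' : v \in nrm sep (tg H') x by move: vx; rewrite /nrm la ea.
    have xn' : x \in nodes (tg H') by rewrite -mem.
    have lx' : lab (tg H') x = Some g by rewrite -la.
    have [cr sz] := i4 x g xn' lx' v vx'.
    split; last by rewrite gs.
    move=> w c wn vw lw; have [lw' _] := hl w wn.
    apply: (cr w c); [by rewrite -mem | by apply/(tg_eq_rch teq) | by rewrite -lw'].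
- rewrite /Phi -(perm_big _ pm) /= big_seq [RHS]big_seq; apply: eq_bigr => x xn.
  by have [-> _] := hl x xn.
- exact: perm_size pm.
Qed.

Lemma step_inv (G H : tgraph F) : Inv G -> step GRS G H ->
  [/\ Inv H, Phi H < Phi G & gsize H <= gsize G + B].
Proof.
case=> uG i2 [ht hht] i4 [ru [phi [iota [gr hh iinj ifresh teq]]]].
have iRR := InvRR uG i2 hht i4 gr hh iinj ifresh.
have [iH -> ->] := tg_eq_inv teq iRR.
split => //; first exact (PhiRR uG i2 hht i4 gr hh iinj ifresh).
exact (gsizeRR i4 iota gr hh).
Qed.

Lemma nsteps_inv m (G H : tgraph F) : nsteps GRS m G H -> Inv G ->
  [/\ Inv H, m + Phi H <= Phi G & gsize H <= gsize G + m * B].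
Proof.
elim=> {m G H} [G | m G G' H st _ IH] iG; first by split; rewrite ?mul0n ?addn0.
have [iG' lt sz] := step_inv iG st.
have [iH le sz'] := IH iG'.
split => //; first by rewrite addSn; apply: leq_ltn_trans le lt.
move: sz sz'; rewrite mulSn; lia.
Qed.

Lemma init (G0 : tgraph F) : wf_tgraph ar G0 -> basic isC G0 ->
  size (nodes_below (tg G0) (nrm sep (tg G0) (troot G0))) <= n ->
  Inv G0 /\ Phi G0 <= B ^ R.
Proof.
case=> [[u0 hwf ac] rn rr] [[f0 lf0 nf0] bas] hN.
have i2 : I2 (tg G0) by move=> x /hwf [_ /allP].
have hC : forall x c, x \in nodes (tg G0) -> x != troot G0 -> lab (tg G0) x = Some c -> isC c.
  move=> x c xn xr lx; have /reachbP := rr x xn.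
  case/rch_inv => [e | [c0 cs cx]]; first by rewrite e eqxx in xr.
  rewrite succsE // in cs.
  by apply: (bas c0 cs x c) => //; apply/mem_subP.
split.
  split => //.
    exists (fun x => gsize (sub (tg G0) x)) => x y xn yx; exact: gsize_lt.
  move=> x g xn lx v vx.
  case: (eqVneq x (troot G0)) => [ex | xr]; last first.
    by rewrite (nrm_constr hsep lx (hC x g xn xr lx)) in vx.
  subst x; have va := mem_nrm vx; split.
    by move=> w c wn vw lw; apply: (bas v va w c) => //; apply/mem_subP.
  apply: (@leq_trans (size (nodes_below (tg G0) (nrm sep (tg G0) (troot G0))))).
    apply: uniq_leq_size; first by rewrite filter_uniq.
    by move=> w wv; apply/mem_nodes_below; exists v.
  by apply: leq_trans hN _; rewrite /bnd leq_addr.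
rewrite /Phi (bigD1_seq (troot G0)) //= /wt lf0 (negPf nf0).
rewrite big_seq_cond big1 ?addn0; last first.
  move=> x /andP [xn xr]; case e: (lab (tg G0) x) => [c|] //.
  by rewrite (hC x c xn xr e).
by apply: leq_pexp2l; [exact: B_gt0 | exact: rank_le].
Qed.

End Global.

Import GRing.Theory.

Lemma expn_le (m1 m2 k : nat) : (m1 <= m2)%N -> (m1 ^ k <= m2 ^ k)%N.
Proof. by move=> h; elim: k => // k IH; rewrite !expnS leq_mul. Qed.

Theorem mainTheorem7 (F : finType) (ar : F -> nat) (isC : pred F)
  (GRS : rule F -> Prop) (sep : F -> nat -> bool) (prec : rel F) (d : nat) :
  (* constructor GRS *)
  (forall ru, GRS ru -> wf_rule ar ru /\ constructor_rule isC ru) ->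
  (* precedence terminating with argument separation *)
  separation isC sep ->
  precedence isC prec ->
  (forall ru, GRS ru -> pt sep prec (rK ru) (rr ru) (rl ru)) ->
  (* the bound d *)
  (forall f, ar f <= d) ->
  (forall ru, GRS ru -> ~ in_G_inf GRS ru -> gsize (sub (rK ru) (rr ru)) <= d) ->
  (forall ru, GRS ru -> in_G_inf GRS ru ->
     let K := rK ru in
     [/\ max_shared (cap_nrm sep (sub K (rl ru))),
         (forall v, v \in nrm sep K (rl ru) -> lab K v <> None -> gclosed (sub K v)),
         size (undup ([seq v <- nrm sep K (rl ru) | lab K v == None]
                      ++ nodes_below K (safe sep K (rl ru)))) <= d
       & gsize (sub K (rr ru)) <=
           gsize (sub K (rl ru)) + size (nodes_below K (nrm sep K (rr ru)))]) ->
  exists p : {poly nat}, forall (G0 G : tgraph F) (m : nat),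
    wf_tgraph ar G0 -> gclosed G0 -> basic isC G0 -> wf_tgraph ar G ->
    nsteps GRS m G0 G ->
    let N := nodes_below (tg G0) (nrm sep (tg G0) (troot G0)) in
    m <= horner p (size N) /\
    gsize G <= horner p (size N) + size [seq v <- nodes (tg G0) | v \notin N].
Proof.
move=> hgrs hsep hprec hpt hard hfin hinf.
pose c := 3 + 2 * d + 2 * (#|F| * d * d) + 2 * d.
exists ('X + (c%:P * ('X + 1)) ^+ (#|F|).+1)%R.
move=> G0 G m wf0 _ b0 _ st N.
rewrite hornerD hornerX horner_exp hornerM hornerC hornerD hornerX hornerC.
change ((m <= size N + (c * (size N + 1)) ^ (#|F|).+1)%N /\
  (gsize G <= size N + (c * (size N + 1)) ^ (#|F|).+1 + size [seq v <- nodes (tg G0) | v \notin N])%N).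
have [iG0 phi0] := init prec d hsep (n := size N) wf0 b0 (leqnn _).
have [_ le sz] := nsteps_inv hgrs hsep hprec hpt hard hfin hinf st iG0.
set X := c * (size N + 1).
have hB : B F d (size N) <= X by rewrite /X /c /B /Bn /R; nia.
have hB1 : 0 < B F d (size N) by exact: B_gt0.
have hBR : B F d (size N) ^ #|F| <= X ^ #|F| by apply: expn_le.
have hBR1 : B F d (size N) ^ #|F|.+1 <= X ^ #|F|.+1 by apply: expn_le.
have hXX : X ^ #|F| <= X ^ #|F|.+1 by rewrite expnS leq_pmull // (leq_trans hB1 hB).
have hm : m <= B F d (size N) ^ #|F|.
  by apply: leq_trans (leq_trans (leq_addr _ _) le) phi0.
split.
  by apply: leq_trans hm _; apply: leq_trans hBR _; apply: leq_trans hXX _; rewrite leq_addl.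
have hG0 : gsize G0 <= size N + size [seq v <- nodes (tg G0) | v \notin N].
  have u0 : uniq (nodes (tg G0)) by case: wf0 => [[]].
  have e : size (nodes (tg G0)) = count (fun v => v \in N) (nodes (tg G0)) +
      count (fun v => v \notin N) (nodes (tg G0)) by rewrite -(count_predC (fun v => v \in N)).
  rewrite /gsize e size_filter leq_add2r -size_filter.
  apply: uniq_leq_size; first by rewrite filter_uniq.
  by move=> x; rewrite mem_filter => /andP [].
have hmB : m * B F d (size N) <= X ^ #|F|.+1.
  apply: leq_trans (leq_mul hm (leqnn _)) _; rewrite -expnSr; exact: hBR1.
move: sz hG0 hmB; lia.
Qed.
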